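(* Let $G=(V,E)$ be a graph with $n$ vertices, $m$ edges and maximum degree $\Delta$. The deterministic variant of Procedure Edge-Coloring with parameter $h\le\log\Delta$ computes a proper $(\Delta+3\cdot2^h)$-edge-coloring of $G$ in $O\left(\frac{m\Delta\log n}{2^h}\right)$ time.
   Context: Logarithms are base 2. A proper $k$-edge-coloring is a map $\varphi:E\to\{1,\dots,k\}$ with distinct colors on distinct edges sharing an endpoint. A degree-splitting of $H$ with discrepancy $\kappa$ is a partition $(E_1,E_2)$ of $E(H)$ with $|\deg_{E_1}(v)-\deg_{E_2}(v)|\le\kappa$ for all $v$. Procedure Edge-Coloring$(H,h)$: if $h=0$, return a proper $(\Delta(H)+1)$-edge-coloring of $H$ with palette $\{1,\dots,\Delta(H)+1\}$ computed by a base-case subroutine. Otherwise compute in $O(|E(H)|)$ time a degree-splitting $(E_1,E_2)$ of $H$ with discrepancy at most 2 and $\{|E_1|,|E_2|\}=\{\lfloor |E(H)|/2\rfloor,\lceil |E(H)|/2\rceil\}$; let $H_1=(V(H),E_1)$, $H_2=(V(H),E_2)$ with isolated vertices discarded; compute $\varphi_1=$ Edge-Coloring$(H_1,h-1)$, $\varphi_2=$ Edge-Coloring$(H_2,h-1)$; return $\varphi=\varphi_1$ on $E_1$ and $\varphi=p_1+\varphi_2$ on $E_2$, where $p_1$ is the palette size of $\varphi_1$. Deterministic variant: the base-case subroutine is a deterministic algorithm computing a proper $(\Delta'+1)$-edge-coloring of a graph with $n'$ vertices, $m'$ edges and maximum degree $\Delta'$ in $O(m'\Delta'\log n')$ time.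 *)

(* Defs.v *)
From mathcomp Require Import all_boot.
From Stdlib Require Import Reals.

Set Implicit Arguments.
Unset Strict Implicit.
Unset Printing Implicit Defensive.

Definition log2 (x : R) : R := (ln x / ln 2)%R.

Section Graphs.
Variable V : finType.

Definition graph_on (W : {set V}) (E : {set {set V}}) : Prop :=
  forall e, e \in E -> #|e| = 2 /\ e \subset W.

Definition deg (E : {set {set V}}) (v : V) : nat := #|[set e in E | v \in e]|.

Definition maxdeg (E : {set {set V}}) : nat := \max_(v : V) deg E v.

Definition nonisolated (E : {set {set V}}) : {set V} := [set v | 0 < deg E v].

Definition proper_edge_coloring (E : {set {set V}}) (k : nat)
    (phi : {set V} -> nat) : Prop :=
  (forall e, e \in E -> 1 <= phi e <= k) /\
  (forall e f, e \in E -> f \in E -> e != f -> e :&: f != set0 ->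
     phi e != phi f).

(* Procedure Edge-Coloring(H, h), parameterized by the deterministic
   subroutines:
   - split W E  : the edge set E1 of the degree-splitting (E2 := E :\: E1),
   - splitCost W E : its running time,
   - base W E   : the base-case coloring,
   - baseCost W E : its running time.
   Returns (coloring, palette size, running time).  The running time of a
   recursive call is the cost of the splitting, plus |E(H)| for assembling
   phi from phi1 and phi2, plus the costs of the two recursive calls. *)
Fixpoint edge_coloring
    (split : {set V} -> {set {set V}} -> {set {set V}})
    (splitCost : {set V} -> {set {set V}} -> nat)
    (base : {set V} -> {set {set V}} -> ({set V} -> nat))
    (baseCost : {set V} -> {set {set V}} -> nat)
    (h : nat) (W : {set V}) (E : {set {set V}})
    : (({set V} -> nat) * nat * nat) :=
  match h with
  | 0 => (base W E, (maxdeg E).+1, baseCost W E)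
  | h'.+1 =>
      let E1 := split W E in
      let E2 := E :\: E1 in
      let: (c1, p1, t1) :=
         edge_coloring split splitCost base baseCost h' (nonisolated E1) E1 in
      let: (c2, p2, t2) :=
         edge_coloring split splitCost base baseCost h' (nonisolated E2) E2 in
      ((fun e => if e \in E1 then c1 e else p1 + c2 e),
       p1 + p2,
       splitCost W E + #|E| + t1 + t2)
  end.

End Graphs.

(* Main.v *)
Require Import Defs.
From mathcomp Require Import all_boot.
From mathcomp Require Import zify.
From Stdlib Require Import Reals Lra Psatz.

Set Implicit Arguments.
Unset Strict Implicit.
Unset Printing Implicit Defensive.

Lemma ln0 : ln 0 = 0%R.
Proof. unfold ln; case: (Rlt_dec 0 0) => [r|r] /=; [exfalso; exact: (Rlt_irrefl 0 r) | reflexivity]. Qed.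

Lemma ln2_pos : (0 < ln 2)%R.
Proof. rewrite -ln_1; apply ln_increasing; lra. Qed.

Lemma ln_le' x y : (0 < x)%R -> (x <= y)%R -> (ln x <= ln y)%R.
Proof.
move=> hx [h|->]; [left; apply ln_increasing => //| right; reflexivity].
Qed.

Lemma log2_nat_ge0 k : (0 <= log2 (INR k))%R.
Proof.
rewrite /log2; have := ln2_pos => h2.
case: k => [|k]; first by rewrite /= ln0; lra.
apply Rmult_le_pos; last by left; apply Rinv_0_lt_compat.
rewrite -ln_1; apply ln_le'; first lra.
rewrite S_INR; have := pos_INR k; lra.
Qed.

Lemma log2_nat_le k n : (k <= n)%N -> (log2 (INR k) <= log2 (INR n))%R.
Proof.
move=> kn; rewrite /log2; have := ln2_pos => h2.
case: k kn => [|k] kn.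
  rewrite /= ln0 /Rdiv Rmult_0_l; exact: log2_nat_ge0.
apply Rmult_le_compat_r; first by left; apply Rinv_0_lt_compat.
apply ln_le'; first by have := pos_INR k; rewrite S_INR; lra.
apply le_INR; apply/leP; exact: kn.
Qed.

Lemma INR_addn m n : INR (m + n)%N = (INR m + INR n)%R.
Proof. exact: plus_INR. Qed.

Lemma INR_muln m n : INR (m * n)%N = (INR m * INR n)%R.
Proof. exact: mult_INR. Qed.

Lemma INR_leq m n : (m <= n)%N -> (INR m <= INR n)%R.
Proof. move/leP; exact: le_INR. Qed.


Lemma graph_sub (V : finType) (W : {set V}) (E E' : {set {set V}}) :
  graph_on W E -> E' \subset E -> graph_on (nonisolated E') E'.
Proof.
move=> gE sub e eE'; have [c2 _] := gE e (subsetP sub e eE').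
split => //; apply/subsetP => v ve; rewrite /nonisolated inE /deg card_gt0.
by apply/set0Pn; exists e; rewrite inE eE' ve.
Qed.

Lemma deg_split (V : finType) (E E1 : {set {set V}}) v :
  E1 \subset E -> deg E1 v + deg (E :\: E1) v = deg E v.
Proof.
move=> sub; rewrite /deg -(cardsID E1 [set e in E | v \in e]).
congr (_ + _); apply: eq_card => e; rewrite !inE.
  by case eE1: (e \in E1); rewrite ?(subsetP sub e eE1) ?andbF ?andbT //= andbC.
by case: (e \in E1); rewrite //= andbC.
Qed.

Lemma maxdeg_le (V : finType) (E : {set {set V}}) D :
  (forall v, 2 * deg E v <= D) -> 2 * maxdeg E <= D.
Proof.
move=> h; suff : maxdeg E <= D %/ 2 by lia.
apply/bigmax_leqP => v _; have := h v; lia.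
Qed.

Lemma deg_le_maxdeg (V : finType) (E : {set {set V}}) v : deg E v <= maxdeg E.
Proof. exact: (leq_bigmax v). Qed.

Lemma deg_le_card (V : finType) (W : {set V}) E v :
  graph_on W E -> deg E v <= #|V|.
Proof.
move=> gE; rewrite /deg.
apply: (@leq_trans #|[set [set v; u] | u : V]|); last exact: leq_imset_card.
apply: subset_leq_card; apply/subsetP => e; rewrite inE => /andP [eE ve].
have [c2 _] := gE e eE; move/eqP: c2 => /cards2P [x [y [xy ee]]].
apply/imsetP; move: ve; rewrite ee !inE => /orP [] /eqP ->.
  by exists y.
by exists x => //; rewrite setUC.
Qed.

Definition split_ok (V : finType) (split : {set V} -> {set {set V}} -> {set {set V}}) :=
  forall W E, graph_on W E ->
     split W E \subset E /\
     (forall v, deg (split W E) v <= deg (E :\: split W E) v + 2 /\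
                deg (E :\: split W E) v <= deg (split W E) v + 2) /\
     (#|split W E| = #|E| %/ 2 \/ #|split W E| = #|E| %/ 2 + #|E| %% 2).

Lemma split_maxdeg (V : finType) split (W : {set V}) E :
  split_ok split -> graph_on W E ->
  2 * maxdeg (split W E) <= maxdeg E + 2 /\
  2 * maxdeg (E :\: split W E) <= maxdeg E + 2.
Proof.
move=> sok gE; have [sub [dd _]] := sok W E gE.
split; apply: maxdeg_le => v; have := deg_split v sub; have := deg_le_maxdeg E v;
  have := dd v; lia.
Qed.

Lemma color_ok (V : finType) split splitCost base baseCost :
  split_ok split ->
  (forall (W : {set V}) E, graph_on W E ->
     proper_edge_coloring E (maxdeg E).+1 (base W E)) ->
  forall h W E, graph_on W E ->
  let r := edge_coloring split splitCost base baseCost h W E in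
  proper_edge_coloring E r.1.2 r.1.1 /\ r.1.2 + 2 <= maxdeg E + 3 * 2 ^ h.
Proof.
move=> sok bok; elim=> [|h IH] W E gE /=.
  by split; [exact: bok | lia].
have [sub _] := sok W E gE.
have [m1 m2] := split_maxdeg sok gE.
set E1 := split W E in sub m1 m2 *.
have g1 := graph_sub gE sub.
have g2 := graph_sub gE (subsetDl E E1).
move: (IH _ _ g1) (IH _ _ g2) => /=.
case: (edge_coloring _ _ _ _ h (nonisolated E1) E1) => [[c1 p1] t1].
case: (edge_coloring _ _ _ _ h _ (E :\: E1)) => [[c2 p2] t2] /=.
move=> [[r1 d1] b1] [[r2 d2] b2].
split; last by lia.
split.
  move=> e eE; case eE1: (e \in E1).
    by have := r1 e eE1; lia.
  have : e \in E :\: E1 by rewrite inE eE1 eE.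
  by move/r2; lia.
move=> e f eE fE ef ne.
case eE1: (e \in E1); case fE1: (f \in E1).
- exact: d1.
- have : f \in E :\: E1 by rewrite inE fE1 fE.
  move/r2 => H2; have H1 := r1 e eE1; apply/eqP; lia.
- have : e \in E :\: E1 by rewrite inE eE1 eE.
  move/r2 => H2; have H1 := r1 f fE1; apply/eqP; lia.
- have e2 : e \in E :\: E1 by rewrite inE eE1 eE.
  have f2 : f \in E :\: E1 by rewrite inE fE1 fE.
  have := d2 e f e2 f2 ef ne; apply: contra => /eqP; lia.
Qed.

Lemma time_ok (V : finType) split splitCost base baseCost (a b : R) :
  split_ok split ->
  (forall (W : {set V}) E, graph_on W E -> (INR (splitCost W E) <= a * INR #|E|)%R) ->
  (forall (W : {set V}) E, graph_on W E ->
     (INR (baseCost W E) <=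
        b * (INR #|E| * INR (maxdeg E) * log2 (INR #|W|)))%R) ->
  forall h W E, graph_on W E ->
  (INR (edge_coloring split splitCost base baseCost h W E).2 * 2 ^ h <=
   (Rabs a + 1) * INR #|E| * INR h * 2 ^ h +
   Rabs b * log2 (INR #|V|) * INR #|E| * (INR (maxdeg E) + 2 * 2 ^ h - 2))%R.
Proof.
move=> sok sc bc; have L0 := log2_nat_ge0 #|V|.
have Ba := Rabs_pos b; have Aa := Rabs_pos a.
elim=> [|h IH] W E gE; last rewrite S_INR /=.
  rewrite /=.
  have LW := log2_nat_le (max_card W).
  have LW0 := log2_nat_ge0 #|W|.
  have m0 := pos_INR #|E|; have d0 := pos_INR (maxdeg E).
  have X0 : (0 <= INR #|E| * INR (maxdeg E) * log2 (INR #|W|))%R.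
    by apply Rmult_le_pos => //; apply Rmult_le_pos.
  have K1 : (b * (INR #|E| * INR (maxdeg E) * log2 (INR #|W|)) <=
             Rabs b * (INR #|E| * INR (maxdeg E) * log2 (INR #|W|)))%R.
    by apply Rmult_le_compat_r => //; apply Rle_abs.
  have K2 : (Rabs b * (INR #|E| * INR (maxdeg E) * log2 (INR #|W|)) <=
             Rabs b * (INR #|E| * INR (maxdeg E) * log2 (INR #|V|)))%R.
    apply Rmult_le_compat_l => //; apply Rmult_le_compat_l => //.
    by apply Rmult_le_pos.
  have Hb := bc W E gE.
  set m := INR #|E| in Hb K1 K2 X0 *.
  set d := INR (maxdeg E) in Hb K1 K2 X0 *.
  set l1 := log2 (INR #|W|) in Hb K1 K2 X0 *.
  set l2 := log2 (INR #|V|) in K2 L0 *.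
  lra.
have [sub [_ _]] := sok W E gE.
have [mm1 mm2] := split_maxdeg sok gE.
have sce := sc W E gE.
set E1 := split W E in sub mm1 mm2 sce *.
have g1 := graph_sub gE sub.
have g2 := graph_sub gE (subsetDl E E1).
have cardE : INR #|E| = (INR #|E1| + INR #|E :\: E1|)%R.
  by rewrite -INR_addn -(cardsID E1 E) (setIidPr sub).
move: (IH _ _ g1) (IH _ _ g2) => /=.
case: (edge_coloring _ _ _ _ h (nonisolated E1) E1) => [[c1 p1] t1].
case: (edge_coloring _ _ _ _ h _ (E :\: E1)) => [[c2 p2] t2] /=.
move=> I1 I2.
rewrite !INR_addn.
move/INR_leq: mm1; move/INR_leq: mm2; rewrite !INR_muln !INR_addn /= => D2 D1.
set P := (2 ^ h)%R in I1 I2 *.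
have P0 : (0 < P)%R by apply pow_lt; lra.
set m1 := INR #|E1| in I1 D1 cardE *.
set m2 := INR #|E :\: E1| in I2 D2 cardE *.
set L := log2 (INR #|V|) in L0 I1 I2 *.
have m10 := pos_INR #|E1|; have m20 := pos_INR #|E :\: E1|.
rewrite -/m1 -/m2 in m10 m20.
rewrite cardE in sce *.
have Ks : (INR (splitCost W E) * P <= Rabs a * (m1 + m2) * P)%R.
  apply Rmult_le_compat_r; first lra.
  apply: Rle_trans sce _; apply Rmult_le_compat_r; [lra | apply Rle_abs].
have BL1 : (0 <= Rabs b * L * m1)%R by apply Rmult_le_pos => //; apply Rmult_le_pos.
have BL2 : (0 <= Rabs b * L * m2)%R by apply Rmult_le_pos => //; apply Rmult_le_pos.
have K1 : (Rabs b * L * m1 * (2 * INR (maxdeg E1)) <=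
           Rabs b * L * m1 * (INR (maxdeg E) + 2))%R.
  by apply Rmult_le_compat_l => //; lra.
have K2 : (Rabs b * L * m2 * (2 * INR (maxdeg (E :\: E1))) <=
           Rabs b * L * m2 * (INR (maxdeg E) + 2))%R.
  by apply Rmult_le_compat_l => //; lra.
set dE := INR (maxdeg E) in D1 D2 K1 K2 *.
set d1 := INR (maxdeg E1) in I1 D1 K1 *.
set d2 := INR (maxdeg (E :\: E1)) in I2 D2 K2 *.
set bL := (Rabs b * L)%R in BL1 BL2 K1 K2 I1 I2 *.
set sC := INR (splitCost W E) in sce Ks *.
set hh := INR h in I1 I2 *.
lra.
Qed.

Theorem corollary3p9 :
  exists C : R -> R -> R,
  forall (V : finType)
    (split : {set V} -> {set {set V}} -> {set {set V}})
    (splitCost : {set V} -> {set {set V}} -> nat)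
    (base : {set V} -> {set {set V}} -> ({set V} -> nat))
    (baseCost : {set V} -> {set {set V}} -> nat)
    (a b : R),
  (* degree-splitting subroutine: discrepancy <= 2, balanced sizes *)
  (forall W E, graph_on W E ->
     split W E \subset E /\
     (forall v, deg (split W E) v <= deg (E :\: split W E) v + 2 /\
                deg (E :\: split W E) v <= deg (split W E) v + 2) /\
     (#|split W E| = #|E| %/ 2 \/ #|split W E| = #|E| %/ 2 + #|E| %% 2)) ->
  (* ... running in O(|E(H)|) time *)
  (forall W E, graph_on W E -> (INR (splitCost W E) <= a * INR #|E|)%R) ->
  (* base case: proper (Delta'+1)-edge-coloring with palette {1..Delta'+1} *)
  (forall W E, graph_on W E ->
     proper_edge_coloring E (maxdeg E).+1 (base W E)) ->
  (* ... in O(m' Delta' log n') time, n' = number of vertices *)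
  (forall W E, graph_on W E ->
     (INR (baseCost W E) <=
        b * (INR #|E| * INR (maxdeg E) * log2 (INR #|W|)))%R) ->
  forall (E : {set {set V}}) (h : nat),
  graph_on [set: V] E ->
  (INR h <= log2 (INR (maxdeg E)))%R ->
  let res := edge_coloring split splitCost base baseCost h [set: V] E in
  proper_edge_coloring E (maxdeg E + 3 * 2 ^ h) res.1.1 /\
  (INR res.2 <=
     C a b * (INR #|E| * INR (maxdeg E) * log2 (INR #|V|) / 2 ^ h))%R.
Proof.
exists (fun a b => Rabs a + 1 + 3 * Rabs b)%R.
move=> V split splitCost base baseCost a b sok sc bok bc E h gE hlog res.
split.
  have [[r d] pb] := color_ok splitCost baseCost sok bok h gE.
  split => // e eE; have := r e eE; rewrite /res; lia.
have T := @time_ok V split splitCost base baseCost a b sok sc bc h _ _ gE.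
rewrite /res; move: T.
set t := INR (edge_coloring _ _ _ _ _ _ _).2.
move=> T; clear res.
have ln2 := ln2_pos.
have L0 := log2_nat_ge0 #|V|.
have Ba := Rabs_pos b; have Aa := Rabs_pos a.
have m0 := pos_INR #|E|.
have t0 : (0 <= t)%R by apply pos_INR.
case D0: (maxdeg E == 0).
  move/eqP: D0 => D0; rewrite D0 in hlog T *.
  have h0 : h = 0%N.
    case: h hlog {T t t0} => // h; rewrite S_INR /log2 /= ln0 => hl.
    have := pos_INR h; lra.
  rewrite h0 /= in T *.
  set m := INR #|E| in T m0 *.
  set L := log2 (INR #|V|) in T L0 *.
  have -> : (m * 0 * L / 1 = 0)%R by field.
  lra.
have Dpos : (0 < INR (maxdeg E))%R.
  apply lt_0_INR; apply/ltP; rewrite lt0n D0 //.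
have P0 : (0 < 2 ^ h)%R by apply pow_lt; lra.
have PD : (2 ^ h <= INR (maxdeg E))%R.
  have hl : (INR h * ln 2 <= ln (INR (maxdeg E)))%R.
    have := Rmult_le_compat_r (ln 2) _ _ (Rlt_le _ _ ln2) hlog.
    rewrite /log2; have -> : (ln (INR (maxdeg E)) / ln 2 * ln 2 = ln (INR (maxdeg E)))%R.
      by field; lra.
    done.
  rewrite -ln_pow in hl; last lra.
  case: (Rle_lt_dec (2 ^ h) (INR (maxdeg E))) => // lt.
  have := ln_increasing _ _ Dpos lt; lra.
have hL : (INR h <= log2 (INR #|V|))%R.
  apply: Rle_trans hlog _; apply: log2_nat_le.
  by apply/bigmax_leqP => v _; apply: deg_le_card gE.
set P := (2 ^ h)%R in T P0 PD *.
set m := INR #|E| in T m0 *.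
set L := log2 (INR #|V|) in T L0 hL *.
set D := INR (maxdeg E) in T Dpos PD *.
set hh := INR h in T hL *.
have hh0 : (0 <= hh)%R by apply pos_INR.
have K1 : (hh * P <= L * D)%R by apply Rmult_le_compat => //; lra.
have K2 : ((Rabs a + 1) * m * (hh * P) <= (Rabs a + 1) * m * (L * D))%R.
  apply Rmult_le_compat_l => //; apply Rmult_le_pos; lra.
have K3 : (Rabs b * L * m * (D + 2 * P - 2) <= Rabs b * L * m * (3 * D))%R.
  apply Rmult_le_compat_l; last lra.
  by apply Rmult_le_pos => //; apply Rmult_le_pos.
apply (Rmult_le_reg_r P) => //.
have -> : ((Rabs a + 1 + 3 * Rabs b) * (m * D * L / P) * P =
           (Rabs a + 1 + 3 * Rabs b) * (m * D * L))%R by field; lra.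
lra.
Qed.
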